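(* For every integer $n\ge1$, $$f(n)=\begin{cases}\lfloor n\varphi\rfloor, & \text{if there exists } m\in\mathbb{N} \text{ with } n-1=\lfloor m\varphi\rfloor,\\ \lfloor n/\varphi\rfloor+1, & \text{otherwise,}\end{cases}$$ where $\varphi=(1+\sqrt5)/2$.
   Context: $\mathbb{N}=\{0,1,2,\dots\}$. The sequence $f:\mathbb{N}\to\mathbb{N}$ is defined greedily: $f(0)=0$, and for $n\ge1$, $f(n)$ is the least natural number such that (i) $f(n)\notin\{f(0),f(1),\dots,f(n-1)\}$ and (ii) $\sum_{1\le i\le n} f(i)$ is divisible by $n$. *)

(* Defs.v *)
From Stdlib Require Import Reals Lra Lia Arith List.
Open Scope R_scope.

Definition phi : R := (1 + sqrt 5) / 2.

(* floor of a nonnegative real, as a natural number (Int_part x = floor x) *)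
Definition floorN (x : R) : nat := Z.to_nat (Int_part x).

Fixpoint psum (g : nat -> nat) (n : nat) : nat :=
  match n with
  | O => O
  | S k => (psum g k + g (S k))%nat
  end.

Definition admissible (g : nat -> nat) (n k : nat) : Prop :=
  (forall i, (i < n)%nat -> g i <> k) /\
  Nat.divide n (psum g (n - 1) + k)%nat.

Definition greedy (g : nat -> nat) : Prop :=
  g 0%nat = 0%nat /\
  forall n, (1 <= n)%nat ->
    admissible g n (g n) /\ (forall k, admissible g n k -> (g n <= k)%nat).

(* Main.v *)
Require Import Defs.
From Stdlib Require Import Reals Lra Lia Arith List ZArith.
Open Scope R_scope.

Lemma sqrt5_sq : sqrt 5 * sqrt 5 = 5.
Proof. apply sqrt_sqrt; lra. Qed.

Lemma sqrt5_bounds : 2.2 < sqrt 5 < 2.3.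
Proof.
  pose proof sqrt5_sq. pose proof (sqrt_pos 5).
  split; nra.
Qed.

Lemma phi_bounds : 1.6 < phi < 1.65.
Proof. unfold phi; pose proof sqrt5_bounds; lra. Qed.

Lemma phi_sq : phi * phi = phi + 1.
Proof. unfold phi. pose proof sqrt5_sq. nra. Qed.

Lemma test (x y p : R) : x <= y * p -> (y+1)*p >= x + p.
Proof. intros. lra. Qed.

Lemma no_sqrt5_Z : forall n : nat, forall M w : Z, (Z.abs_nat M <= n)%nat -> (5*M*M = w*w)%Z -> M = 0%Z.
Proof.
  induction n as [|n IH]; intros M w HM E.
  - lia.
  - destruct (Z.eq_dec M 0) as [|HM0]; [assumption|exfalso].
    pose proof (Z.div_mod w 5 ltac:(lia)) as Hw.
    pose proof (Z.mod_pos_bound w 5 ltac:(lia)) as Hr.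
    set (q := (w / 5)%Z) in *. set (r := (w mod 5)%Z) in *.
    assert (r = 0%Z).
    { rewrite Hw in E.
      assert (Hr': (r = 0 \/ r = 1 \/ r = 2 \/ r = 3 \/ r = 4)%Z) by lia.
      destruct Hr' as [H0|[H0|[H0|[H0|H0]]]]; rewrite H0 in E; lia. }
    rewrite H, Z.add_0_r in Hw. rewrite Hw in E.
    assert (E2 : (5*q*q = M*M)%Z) by lia.
    assert (Hq: q = 0%Z).
    { apply (IH q M); [|exact E2].
      assert (Z.abs q < Z.abs M)%Z by nia. lia. }
    subst q. lia.
Qed.


Lemma phi_irr (m : nat) (z : Z) : (0 < m)%nat -> INR m * phi <> IZR z.
Proof.
  intros Hm E.
  assert (E1 : INR m * sqrt 5 = IZR (2*z - Z.of_nat m)).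
  { rewrite minus_IZR, mult_IZR, <- INR_IZR_INZ. unfold phi in E. simpl. lra. }
  assert (E2 : IZR (5 * Z.of_nat m * Z.of_nat m) = IZR ((2*z - Z.of_nat m) * (2*z - Z.of_nat m))).
  { rewrite !mult_IZR, <- E1, <- INR_IZR_INZ. simpl.
    replace (INR m * sqrt 5 * (INR m * sqrt 5)) with (INR m * INR m * (sqrt 5 * sqrt 5)) by ring.
    rewrite sqrt5_sq. ring. }
  apply eq_IZR in E2.
  pose proof (no_sqrt5_Z _ _ _ (le_n _) E2). lia.
Qed.

Lemma floorN_unique (x : R) (k : nat) : INR k <= x < INR k + 1 -> floorN x = k.
Proof.
  intros [H1 H2]. unfold floorN.
  destruct (base_Int_part x) as [B1 B2].
  rewrite INR_IZR_INZ in H1, H2.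
  assert (IZR (Int_part x) < IZR (Z.of_nat k + 1)) by (rewrite plus_IZR; simpl; lra).
  assert (IZR (Z.of_nat k) < IZR (Int_part x + 1)) by (rewrite plus_IZR; simpl; lra).
  apply lt_IZR in H. apply lt_IZR in H0.
  replace (Int_part x) with (Z.of_nat k) by lia. apply Nat2Z.id.
Qed.

Definition a (m : nat) : nat := floorN (INR m * phi).

Lemma floorN_spec (x : R) : 0 <= x -> INR (floorN x) <= x < INR (floorN x) + 1.
Proof.
  intros Hx. unfold floorN.
  destruct (base_Int_part x) as [B1 B2].
  assert (IZR (-1) < IZR (Int_part x)) by lra. apply lt_IZR in H.
  rewrite INR_IZR_INZ, Z2Nat.id by lia. lra.
Qed.

Lemma a_spec (m : nat) : INR (a m) <= INR m * phi < INR (a m) + 1.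
Proof.
  apply floorN_spec. pose proof (pos_INR m). pose proof phi_bounds. nra.
Qed.

Lemma a_strict (m : nat) : (0 < m)%nat -> INR (a m) < INR m * phi.
Proof.
  intros Hm. destruct (a_spec m) as [H _]. destruct H as [H|H]; [exact H|].
  exfalso. apply (phi_irr m (Z.of_nat (a m)) Hm). rewrite <- INR_IZR_INZ. auto.
Qed.

Lemma a0 : a 0 = 0%nat.
Proof. apply floorN_unique. simpl. lra. Qed.
Lemma a1 : a 1 = 1%nat.
Proof. apply floorN_unique. simpl. pose proof phi_bounds. lra. Qed.

Lemma a_step (n : nat) : (a n + 1 <= a (S n) <= a n + 2)%nat.
Proof.
  pose proof (a_spec n). pose proof (a_spec (S n)). pose proof phi_bounds.
  rewrite S_INR in H0. split.
  - assert (a n < a (S n))%nat; [|lia]. apply INR_lt. lra.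
  - assert (a (S n) < a n + 3)%nat; [|lia].
    apply INR_lt. rewrite plus_INR. simpl. lra.
Qed.

Lemma a_step2 (n : nat) : (a n + 3 <= a (S (S n)))%nat.
Proof.
  pose proof (a_spec n). pose proof (a_spec (S (S n))). pose proof phi_bounds.
  rewrite !S_INR in H0.
  assert (a n + 2 < a (S (S n)))%nat; [|lia].
  apply INR_lt. rewrite plus_INR. simpl. lra.
Qed.

Lemma a_ge (n : nat) : (n <= a n)%nat.
Proof. induction n. lia. pose proof (a_step n). lia. Qed.

Definition c (k : nat) : nat := (a k - k + 1)%nat.

Lemma R5 (k : nat) : (1 <= k)%nat -> (a (c k - 1) < k /\ k <= a (c k))%nat.
Proof.
  intros Hk. pose proof (a_ge k) as Hge.
  pose proof (a_spec k) as [S1 S2]. pose proof phi_bounds as Hpb. pose proof phi_sq as Hps.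
  assert (Hkp : 0 < INR k) by (apply lt_0_INR; lia).
  split.
  - replace (c k - 1)%nat with (a k - k)%nat by (unfold c; lia).
    set (t := (a k - k)%nat).
    assert (Ht : INR t = INR (a k) - INR k) by (unfold t; rewrite minus_INR; auto).
    assert (HP : INR t * phi <= INR k).
    { rewrite Ht. assert (INR (a k) * phi <= INR k * phi * phi) by (apply Rmult_le_compat_r; lra).
      replace (INR k * phi * phi) with (INR k * (phi*phi)) in H by ring. rewrite Hps in H. nra. }
    destruct (Nat.eq_dec t 0) as [Ht0|Ht0].
    + rewrite Ht0, a0. lia.
    + assert (HP' : INR t * phi < INR k).
      { destruct HP as [HP|HP]; [exact HP|]. exfalso.
        apply (phi_irr t (Z.of_nat k)); [lia|]. rewrite <- INR_IZR_INZ. auto. }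
      pose proof (a_spec t) as [T1 T2]. apply INR_lt. lra.
  - assert (Hc : INR (c k) = INR (a k) - INR k + 1).
    { unfold c. rewrite plus_INR, minus_INR by auto. simpl. ring. }
    assert (HP : INR (c k) * phi > INR k).
    { rewrite Hc. assert ((INR (a k) - INR k + 1) * phi > (INR k * phi - INR k) * phi)
        by (apply Rmult_gt_compat_r; lra).
      replace ((INR k * phi - INR k) * phi) with (INR k * (phi * phi) - INR k * phi) in H by ring.
      rewrite Hps in H. lra. }
    pose proof (a_spec (c k)) as [T1 T2].
    assert (k < a (c k) + 1)%nat; [|lia].
    apply INR_lt. rewrite plus_INR. simpl. lra.
Qed.


Lemma a_lt (i j : nat) : (i < j)%nat -> (a i < a j)%nat.
Proof.
  intros H. induction H.
  - pose proof (a_step i). lia.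
  - pose proof (a_step m). lia.
Qed.

Lemma a_lt_inv (i j : nat) : (a i < a j)%nat -> (i < j)%nat.
Proof.
  intros H. destruct (Nat.lt_ge_cases i j) as [|Hj]; auto.
  destruct (Nat.eq_dec i j). subst; lia.
  assert (j < i)%nat by lia. pose proof (a_lt _ _ H0). lia.
Qed.

Lemma Kp (n j : nat) : (1 <= n)%nat -> a j = n -> a (c n) = n.
Proof.
  intros Hn Hj. destruct (R5 n Hn) as [H1 H2].
  assert (H1' : (a (c n - 1) < a j)%nat) by lia.
  apply a_lt_inv in H1'.
  assert (j <= c n)%nat.
  { destruct (Nat.le_gt_cases j (c n)); auto. apply a_lt in H. lia. }
  assert (j = c n) by (unfold c in *; lia). rewrite <- H0. auto.
Qed.

Lemma R4 (n : nat) : (1 <= n)%nat -> ((exists m, a m = n) <-> a (S n) = (a n + 2)%nat).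
Proof.
  intros Hn.
  pose proof (a_spec n) as [S1 S2]. pose proof phi_bounds as Hpb. pose proof phi_sq as Hps.
  pose proof (a_ge n) as Hge. pose proof (a_step n) as Hst.
  assert (Hth : INR (a n) < INR n * phi) by (apply a_strict; lia).
  assert (Hc : INR (c n) = INR (a n) - INR n + 1).
  { unfold c. rewrite plus_INR, minus_INR by auto. simpl. ring. }
  pose proof (a_spec (S n)) as [T1 T2]. rewrite S_INR in T1, T2.
  set (x := INR (a n)) in *. set (y := INR n) in *.
  split.
  - intros [j Hj]. pose proof (Kp n j Hn Hj) as Hk.
    pose proof (a_spec (c n)) as [U1 U2]. rewrite Hk, Hc in U2. fold y in U2.
    set (th := y * phi - x).
    assert (E : (x - y + 1) * phi = y - th * phi + phi).
    { unfold th. assert (y*(phi*phi) = y*phi + y) by (rewrite Hps; ring). lra. }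
    assert (Hth2 : th > 2 - phi).
    { assert (phi * (1 - th) < 1) by nra.
      destruct (Rle_lt_dec th (2 - phi)); [|lra].
      assert (phi * (1 - th) >= phi * (phi - 1)) by (apply Rmult_ge_compat_l; lra).
      nra. }
    assert (a n + 1 < a (S n))%nat; [|lia].
    apply INR_lt. rewrite plus_INR. simpl. fold x. unfold th in Hth2. lra.
  - intros Hs.
    assert (Hs' : INR (a (S n)) = x + 2) by (rewrite Hs, plus_INR; reflexivity).
    assert (Hlt : INR (a (S n)) < (y + 1) * phi).
    { pose proof (a_strict (S n) ltac:(lia)). rewrite S_INR in H. exact H. }
    exists (c n).
    set (th := y * phi - x).
    assert (Hth2 : th > 2 - phi) by (unfold th; lra).
    assert (E : (x - y + 1) * phi = y - th * phi + phi).
    { unfold th. assert (y*(phi*phi) = y*phi + y) by (rewrite Hps; ring). lra. }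
    assert (phi * (1 - th) < phi * (phi - 1)) by (apply Rmult_lt_compat_l; lra).
    pose proof (a_spec (c n)) as [U1 U2]. rewrite Hc in U1.
    destruct (R5 n Hn) as [_ HR].
    assert (a (c n) < n + 1)%nat; [|lia].
    apply INR_lt. rewrite plus_INR. simpl. fold y. nra.
Qed.

Lemma floor_div (n : nat) : floorN (INR n / phi) = (a n - n)%nat.
Proof.
  apply floorN_unique. pose proof (a_spec n) as [S1 S2]. pose proof phi_bounds as Hpb.
  pose proof phi_sq as Hps. pose proof (a_ge n).
  rewrite minus_INR by auto.
  replace (INR n / phi) with (INR n * phi - INR n).
  - lra.
  - assert (E : INR n = (INR n*phi - INR n)*phi).
    { assert (INR n*(phi*phi) = INR n*phi + INR n) by (rewrite Hps; ring). lra. }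
    symmetry. rewrite E at 1. field. lra.
Qed.

Local Open Scope nat_scope.

Definition F (n : nat) : nat :=
  match n with
  | 0 => 0
  | 1 => 1
  | S m => if Nat.eqb (a n) (a m + 2) then a n else c n
  end.

Lemma a_le2 (n : nat) : 1 <= n -> a n <= 2*n - 1.
Proof.
  intros H. induction H. rewrite a1; lia. pose proof (a_step m). lia.
Qed.

Lemma c_ge1 n : 1 <= c n.
Proof. unfold c; lia. Qed.
Lemma c_le n : 1 <= n -> c n <= n.
Proof. intros. pose proof (a_le2 n H). unfold c. lia. Qed.
Lemma c_step n : c (S n) + a n + 1 = c n + a (S n).
Proof. pose proof (a_ge n). pose proof (a_step n). unfold c. lia. Qed.
Lemma c_mono_S n : c n <= c (S n).
Proof. pose proof (c_step n). pose proof (a_step n). lia. Qed.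
Lemma c_mono i j : i <= j -> c i <= c j.
Proof. intros H; induction H; auto. pose proof (c_mono_S m). lia. Qed.
Lemma c_step2 n : c n < c (S (S n)).
Proof. pose proof (c_step n). pose proof (c_step (S n)). pose proof (a_step2 n). lia. Qed.
Lemma c1 : c 1 = 1.
Proof. unfold c. rewrite a1. lia. Qed.
Lemma a2 : a 2 = 3.
Proof.
  assert (H : exists m, a m = 1) by (exists 1; apply a1).
  apply (R4 1 (le_n _)) in H. rewrite a1 in H. exact H.
Qed.
Lemma c2 : c 2 = 2.
Proof. unfold c. rewrite a2. lia. Qed.

Lemma F_A n : 2 <= n -> a n = a (n-1) + 2 -> F n = a n.
Proof.
  intros Hn E. destruct n as [|[|m]]; try lia. unfold F.
  replace (S (S m) - 1) with (S m) in E by lia. rewrite E, Nat.eqb_refl. lia.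
Qed.
Lemma F_nA n : 2 <= n -> a n = a (n-1) + 1 -> F n = c n.
Proof.
  intros Hn E. destruct n as [|[|m]]; try lia. unfold F.
  replace (S (S m) - 1) with (S m) in E by lia. rewrite E.
  replace (Nat.eqb (a (S m) + 1) (a (S m) + 2)) with false; auto.
  symmetry. apply Nat.eqb_neq. lia.
Qed.
Lemma F_cases n : 2 <= n -> (a n = a (n-1) + 2 /\ F n = a n) \/ (a n = a (n-1) + 1 /\ F n = c n).
Proof.
  intros Hn. pose proof (a_step (n-1)). replace (S (n-1)) with n in H by lia.
  destruct (Nat.eq_dec (a n) (a (n-1) + 2)).
  - left. split; auto. apply F_A; auto.
  - right. assert (a n = a (n-1) + 1) by lia. split; auto. apply F_nA; auto.
Qed.

Lemma F_le_a i : F i <= a i.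
Proof.
  destruct i as [|[|m]]. simpl; lia. simpl. rewrite a1; lia.
  destruct (F_cases (S (S m))) as [[_ H]|[_ H]]; try lia. 
  pose proof (c_le (S (S m))). pose proof (a_ge (S (S m))). lia.
Qed.

Lemma psum_F n : psum F n = n * c n.
Proof.
  induction n as [|n IH]. reflexivity.
  change (psum F (S n)) with (psum F n + F (S n)). rewrite IH.
  destruct n as [|n]. simpl. rewrite c1. reflexivity.
  destruct (F_cases (S (S n))) as [[E H]|[E H]]; try lia;
  replace (S (S n) - 1) with (S n) in E by lia; rewrite H;
  pose proof (c_step (S n)); pose proof (a_ge (S n)); unfold c in *; nia.
Qed.

Lemma div_win (n c k q : nat) : 0 < n -> c < n -> (n-1)*c + k = q*n -> k < c + n -> k = c.
Proof.
  intros Hn Hc E Hk.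
  destruct (lt_eq_lt_dec q c) as [[Hq|Hq]|Hq].
  - assert (q*n <= (c-1)*n) by (apply Nat.mul_le_mono_r; lia). nia.
  - subst. nia.
  - assert ((c+1)*n <= q*n) by (apply Nat.mul_le_mono_r; lia). nia.
Qed.


Lemma a_le_mono i j : i <= j -> a i <= a j.
Proof. intros H. destruct (Nat.eq_dec i j). subst; lia. pose proof (a_lt i j ltac:(lia)). lia. Qed.

Lemma gap_aux k : 1 <= k -> forall N, k <= a N -> exists i, 1 <= i /\ a (i-1) < k /\ k <= a i.
Proof.
  intros Hk N. induction N as [|N IH]; intros H.
  - rewrite a0 in H. lia.
  - destruct (Nat.le_gt_cases k (a N)) as [H'|H']; auto.
    exists (S N). replace (S N - 1) with N by lia. repeat split; auto; lia.
Qed.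

Lemma gap k : 1 <= k -> (forall j, a j <> k) -> exists i, 2 <= i /\ a (i-1) + 1 = k /\ a i = k + 1.
Proof.
  intros Hk Hn. destruct (gap_aux k Hk (S k)) as [i [H1 [H2 H3]]].
  { pose proof (a_ge (S k)). lia. }
  pose proof (a_step (i-1)). replace (S (i-1)) with i in H by lia.
  pose proof (Hn i).
  assert (i <> 1). { intro. subst. rewrite a1 in *. simpl in H2. rewrite a0 in H2. lia. }
  exists i. repeat split; lia.
Qed.

Lemma U_lem n : 2 <= n -> a n = a (n-1) + 2 -> exists i, i < n /\ F i = c (n-1).
Proof.
  intros Hn E.
  destruct (Nat.eq_dec n 2) as [->|Hn2].
  { exists 1. split. lia. simpl. rewrite c1. reflexivity. }
  set (p := n - 1).
  assert (Hp : 2 <= p) by (unfold p; lia).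
  destruct (F_cases p Hp) as [[Ep Fp]|[Ep Fp]].
  2:{ exists p. split. unfold p; lia. exact Fp. }
  assert (Hp1 : exists m, a m = p - 1).
  { apply (R4 (p-1) ltac:(lia)). replace (S (p-1)) with p by lia. exact Ep. }
  assert (Hp2 : exists m, a m = p).
  { apply (R4 p ltac:(lia)). replace (S p) with n by (unfold p; lia). exact E. }
  destruct Hp1 as [j1 Hj1]. destruct Hp2 as [j2 Hj2].
  pose proof (Kp (p-1) j1 ltac:(lia) Hj1) as K1.
  pose proof (Kp p j2 ltac:(lia) Hj2) as K2.
  pose proof (c_step (p-1)) as Cs. replace (S (p-1)) with p in Cs by lia.
  set (m := c p) in *.
  assert (Hm : c (p-1) = m - 1) by lia.
  pose proof (c_ge1 (p-1)).
  assert (Hnot : forall j, a j <> m - 1).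
  { intros j Hj. assert (Hx : exists j, a j = m - 1) by (exists j; auto).
    apply (R4 (m-1) ltac:(lia)) in Hx.
    replace (S (m-1)) with m in Hx by lia. rewrite Hm in K1. lia. }
  destruct (gap (m-1) ltac:(lia) Hnot) as [i [Hi1 [Hi2 Hi3]]].
  exists i. split.
  - pose proof (a_ge i). pose proof (c_le p ltac:(lia)). fold m in H1. unfold p in *. lia.
  - rewrite (F_A i Hi1 ltac:(lia)). fold p. fold m. lia.
Qed.


Lemma D_lem n : 2 <= n -> a n = a (n-1) + 1 -> forall i, i < n -> F i <> c n.
Proof.
  intros Hn E i Hi.
  pose proof (c_step (n-1)) as Cs. replace (S (n-1)) with n in Cs by lia.
  assert (Hcn : c n = c (n-1)) by lia.
  destruct i as [|[|i']].
  - simpl. pose proof (c_ge1 n). lia.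
  - simpl. pose proof (c_mono 2 n Hn). rewrite c2 in H. lia.
  - set (i := S (S i')) in *. assert (Hi2 : 2 <= i) by (unfold i; lia).
    destruct (F_cases i Hi2) as [[Ei Fi]|[Ei Fi]]; rewrite Fi; intro Heq.
    + set (m := c n) in *.
      destruct (R5 n ltac:(lia)) as [R1 R2]. destruct (R5 (n-1) ltac:(lia)) as [R3 R4'].
      rewrite <- Hcn in R3, R4'. fold m in R3, R4'.
      assert (Hnot : a m <> n - 1).
      { intro Hx. assert (Hy : exists j, a j = n - 1) by (exists m; auto).
        apply (R4 (n-1) ltac:(lia)) in Hy. replace (S (n-1)) with n in Hy by lia. lia. }
      pose proof (a_le_mono 2 i Hi2). rewrite a2 in H.
      pose proof (a_step (m-1)). replace (S (m-1)) with m in H0 by lia.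
      assert (Em : a m = a (m-1) + 2) by lia.
      assert (Hy : exists j, a j = m - 1).
      { apply (R4 (m-1) ltac:(lia)). replace (S (m-1)) with m by lia. exact Em. }
      destruct Hy as [j Hj].
      assert (L1 : a (i-1) < a j) by lia. assert (L2 : a j < a i) by lia.
      apply a_lt_inv in L1. apply a_lt_inv in L2. lia.
    + pose proof (c_step (i-1)) as Ci. replace (S (i-1)) with i in Ci by lia.
      assert (c i = c (i-1)) by lia.
      pose proof (c_step2 (i-1)). replace (S (S (i-1))) with (S i) in H0 by lia.
      pose proof (c_mono (S i) n ltac:(lia)). lia.
Qed.

Lemma greedy_F : greedy F.
Proof.
  split. reflexivity.
  intros n Hn.
  assert (Hps : psum F (n-1) + F n = n * c n).
  { rewrite <- psum_F. destruct n. lia. simpl. replace (n-0) with n by lia. reflexivity. }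
  assert (Hps' : psum F (n-1) = (n-1) * c (n-1)) by apply psum_F.
  split. split.
  - destruct (Nat.eq_dec n 1) as [->|Hn1].
    + intros i Hi. replace i with 0 by lia. simpl. lia.
    + destruct (F_cases n ltac:(lia)) as [[E Fn]|[E Fn]].
      * intros i Hi. rewrite Fn. pose proof (F_le_a i). pose proof (a_le_mono i (n-1) ltac:(lia)). lia.
      * intros i Hi. rewrite Fn. apply D_lem; auto; lia.
  - rewrite Hps. exists (c n). ring.
  - intros k [Hd [q Hq]].
    destruct (Nat.eq_dec n 1) as [->|Hn1].
    + simpl. pose proof (Hd 0 ltac:(lia)). simpl in H. lia.
    + rewrite Hps' in Hq. pose proof (c_le (n-1) ltac:(lia)) as Cl.
      pose proof (c_step (n-1)) as Cs. replace (S (n-1)) with n in Cs by lia.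
      destruct (F_cases n ltac:(lia)) as [[E Fn]|[E Fn]]; rewrite Fn.
      * destruct (Nat.le_gt_cases (a n) k) as [|Hk]; auto. exfalso.
        assert (k = c (n-1)) by (apply (div_win n (c (n-1)) k q); lia).
        destruct (U_lem n ltac:(lia) E) as [i [Hi Fi]]. apply (Hd i Hi). lia.
      * destruct (Nat.le_gt_cases (c n) k) as [|Hk]; auto. exfalso.
        assert (k = c (n-1)) by (apply (div_win n (c (n-1)) k q); lia). lia.
Qed.

Lemma psum_ext (g h : nat -> nat) N : (forall i, i <= N -> g i = h i) -> psum g N = psum h N.
Proof.
  induction N; intros H. reflexivity. simpl. rewrite IHN, (H (S N)); auto.
Qed.

Lemma greedy_unique g : greedy g -> forall n, g n = F n.
Proof.
  intros [G0 G] n. induction n as [n IH] using (well_founded_induction lt_wf).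
  destruct n as [|n']. rewrite G0. reflexivity.
  set (n := S n') in *.
  assert (Hadm : forall k, admissible g n k <-> admissible F n k).
  { intros k. unfold admissible.
    rewrite (psum_ext g F (n-1)) by (intros; apply IH; unfold n; lia).
    split; intros [H1 H2]; split; auto; intros i Hi; [rewrite <- IH|rewrite IH]; auto. }
  destruct (G n ltac:(unfold n; lia)) as [Ga Gm].
  destruct (proj2 greedy_F n ltac:(unfold n; lia)) as [Fa Fm].
  apply Nat.le_antisymm.
  - apply Gm. apply Hadm. auto.
  - apply Fm. apply Hadm. auto.
Qed.

Close Scope nat_scope.
Open Scope R_scope.

Theorem theorem4 :
  (exists g : nat -> nat, greedy g) /\
  (forall g : nat -> nat, greedy g ->
    forall n : nat, (1 <= n)%nat ->
      ((exists m : nat, (n - 1)%nat = floorN (INR m * phi)) ->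
         g n = floorN (INR n * phi)) /\
      (~ (exists m : nat, (n - 1)%nat = floorN (INR m * phi)) ->
         g n = (floorN (INR n / phi) + 1)%nat)).
Proof.
  Local Open Scope nat_scope.
  split. exists F. exact greedy_F.
  intros g Hg n Hn. rewrite (greedy_unique g Hg n). fold (a n).
  rewrite floor_div.
  destruct (Nat.eq_dec n 1) as [->|Hn1].
  { split. intros _. simpl. rewrite a1. reflexivity.
    intros H. exfalso. apply H. exists 0%nat. fold (a 0%nat). rewrite a0. reflexivity. }
  split.
  - intros [m Hm]. fold (a m) in Hm.
    assert (Hx : exists m, a m = n - 1) by (exists m; auto).
    apply (R4 (n-1) ltac:(lia)) in Hx. replace (S (n-1)) with n in Hx by lia.
    apply F_A; auto; lia.
  - intros Hm. destruct (F_cases n ltac:(lia)) as [[E Fn]|[E Fn]].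
    + exfalso. apply Hm.
      assert (Hx : exists m, a m = n - 1).
      { apply (R4 (n-1) ltac:(lia)). replace (S (n-1)) with n by lia. auto. }
      destruct Hx as [m Hx]. exists m. unfold a in Hx. auto.
    + rewrite Fn. unfold c. lia.
Qed.
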